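(* Let $k \geq 3$ and let $A$ be a finite abelian group with at least $k$ elements. Fix a distinct difference system $S_1,\ldots,S_l$ in $A$. Call a subset of $A$ a basis if it has $k$ elements and is not a translate of a subset of some $S_i$ (i.e. it is not of the form $\{s+a : s \in T\}$ for some $a \in A$ and some $T \subseteq S_i$). Then these bases define a simple rank $k$ $A$-invariant matroid structure on $A$.
   Context: For an abelian group $A$, subsets $S_1,\ldots,S_l \subseteq A$ form a distinct difference system if: (i) for any $i,j$ and any $x,y \in S_i$, $z,w \in S_j$ with $x \neq y$ and $z \neq w$, the equation $x-y=z-w$ implies $x=z$ and $y=w$; (ii) each $S_i$ contains $0$ and at least one other element; (iii) $S_i \cap S_j = \{0\}$ for $i \neq j$. $A$ acts on itself by translation, and a matroid on $A$ is $A$-invariant if translates of bases are bases. A matroid is simple if every circuit has at least three elements. *)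

(* Defs.v *)
From HB Require Import structures.
From mathcomp Require Import all_boot all_order all_algebra.
Set Implicit Arguments. Unset Strict Implicit. Unset Printing Implicit Defensive.
Import GRing.Theory.
Local Open Scope ring_scope.

Definition distinct_difference_system (A : finZmodType) (l : nat)
    (S : 'I_l -> {set A}) : Prop :=
  [/\ (forall (i j : 'I_l) (x y z w : A),
         x \in S i -> y \in S i -> z \in S j -> w \in S j ->
         x != y -> z != w -> x - y = z - w -> x = z /\ y = w),
      (forall i : 'I_l, 0 \in S i /\ exists2 s, s \in S i & s != 0)
    & (forall i j : 'I_l, i != j -> S i :&: S j = [set 0])].

Definition translate (A : finZmodType) (T : {set A}) (a : A) : {set A} :=
  [set s + a | s in T].

Definition dds_bases (A : finZmodType) (l : nat) (S : 'I_l -> {set A}) (k : nat)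
  : {set {set A}} :=
  [set X : {set A} | (#|X| == k) &&
     ~~ [exists i : 'I_l, exists a : A, exists T : {set A},
           (T \subset S i) && (X == translate T a)]].

Definition matroid_bases (T : finType) (B : {set {set T}}) : Prop :=
  B != set0 /\
  forall B1 B2, B1 \in B -> B2 \in B -> forall x, x \in B1 :\: B2 ->
    exists2 y, y \in B2 :\: B1 & (B1 :\ x) :|: [set y] \in B.

Definition indep (T : finType) (B : {set {set T}}) (X : {set T}) : Prop :=
  exists2 Y, Y \in B & X \subset Y.

Definition circuit (T : finType) (B : {set {set T}}) (C : {set T}) : Prop :=
  ~ indep B C /\ forall D : {set T}, D \proper C -> indep B D.

Definition simple_matroid (T : finType) (B : {set {set T}}) : Prop :=
  forall C, circuit B C -> (3 <= #|C|)%N.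

Definition matroid_rank_is (T : finType) (B : {set {set T}}) (k : nat) : Prop :=
  forall X, X \in B -> #|X| = k.

Definition translation_invariant (A : finZmodType) (B : {set {set A}}) : Prop :=
  forall X (a : A), X \in B -> translate X a \in B.

(* Main.v *)
Require Import Defs.
From HB Require Import structures.
From mathcomp Require Import all_boot all_order all_algebra.

Set Implicit Arguments. Unset Strict Implicit. Unset Printing Implicit Defensive.
Import GRing.Theory.

Section Aux.
Variables (A : finZmodType) (l : nat) (S : 'I_l -> {set A}).
Hypothesis HS : distinct_difference_system S.

Local Open Scope ring_scope.

Definition line i a := translate (S i) a.

Lemma mem_translate (T : {set A}) a x : (x \in translate T a) = (x - a \in T).
Proof.
apply/imsetP/idP => [[s Hs ->]|Hx]; first by rewrite addrK.
by exists (x - a) => //; rewrite subrK.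
Qed.

Lemma subsub (u v a : A) : (u - a) - (v - a) = u - v.
Proof. by rewrite opprB addrA subrK. Qed.

Lemma two_pts u v i j a b : u != v -> u \in line i a -> v \in line i a ->
  u \in line j b -> v \in line j b -> i = j /\ a = b.
Proof.
case: HS => H1 H2 H3 uv; rewrite !mem_translate => ui vi uj vj.
have st : u - a != v - a.
  apply: contra uv => /eqP /(congr1 (fun z => z + a)); rewrite !subrK => ->.
  by [].
have st' : u - b != v - b.
  apply: contra uv => /eqP /(congr1 (fun z => z + b)); rewrite !subrK => ->.
  by [].
have [e1 e2] := H1 i j _ _ _ _ ui vi uj vj st st' (etrans (subsub _ _ _) (esym (subsub _ _ _))).
split; last first.
  by have := e1 => /(congr1 (fun z => u - z)); rewrite !subKr.
case: (eqVneq i j) => // hij.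
have : u - a \in S i :&: S j by rewrite inE ui e1 uj.
have : v - a \in S i :&: S j by rewrite inE vi e2 vj.
rewrite H3 // !inE => /eqP h1 /eqP h2.
by rewrite h1 h2 eqxx in st.
Qed.

Lemma two_lines (Y : {set A}) i j a b : (1 < #|Y|)%N ->
  Y \subset line i a -> Y \subset line j b -> i = j /\ a = b.
Proof.
move=> /card_gt1P [u [v [uY vY uv]]] /subsetP s1 /subsetP s2.
by apply: (two_pts uv); [apply: s1|apply: s1|apply: s2|apply: s2].
Qed.

Lemma line_not_all i a : exists z, z \notin line i a.
Proof.
case: (pickP [pred z | z \notin line i a]) => [z Hz|all]; first by exists z.
exfalso.
have inl z : z - a \in S i.
  by have := all z; rewrite /= mem_translate => /negbFE.
case: HS => H1 H2 H3.
have [h0 [g gS g0]] := H2 i.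
have gg : g + g - a + a - a \in S i by [].
have h2 : g + g \in S i.
  by have := inl (g + g + a); rewrite addrK.
have ne : g + g != g.
  apply: contra g0 => /eqP /(congr1 (fun z => z - g)); rewrite addrK subrr => ->.
  by [].
have [e _] := H1 i i g 0 (g + g) g gS h0 h2 gS g0 ne (etrans (subr0 g) (esym (addrK g g))).
by move: ne; rewrite -e eqxx.
Qed.

Variable k : nat.
Hypothesis Hk : (3 <= k)%N.
Hypothesis HkA : (k <= #|A|)%N.

Lemma inB X : (X \in dds_bases S k) =
  (#|X| == k) && ~~ [exists i, exists a, X \subset line i a].
Proof.
rewrite inE; congr andb; congr negb.
apply/existsP/existsP => [[i /existsP [a /existsP [T /andP [sub /eqP ->]]]]
                         | [i /existsP [a sub]]].
  exists i; apply/existsP; exists a; apply/subsetP => y /imsetP [t Ht ->].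
  by rewrite mem_translate addrK; apply: (subsetP sub).
exists i; apply/existsP; exists a; apply/existsP; exists [set x - a | x in X].
apply/andP; split.
  by apply/subsetP => t /imsetP [x Hx ->]; rewrite -mem_translate; apply: (subsetP sub).
apply/eqP/setP => y; rewrite mem_translate; apply/idP/imsetP => [Hy|[x Hx]].
  by exists y.
by move=> /(congr1 (fun z => z + a)); rewrite !subrK => ->.
Qed.

Lemma grow n (Z : {set A}) : (#|Z| + n <= #|A|)%N ->
  exists X : {set A}, Z \subset X /\ #|X| = (#|Z| + n)%N.
Proof.
elim: n Z => [|n IH] Z hZ; first by exists Z; rewrite addn0.
case: (pickP [pred w | w \notin Z]) => [w Hw|all].
  have := IH (w |: Z); rewrite cardsU1 (Hw : w \notin Z) /= add1n addSnnS => /(_ hZ) [X [s c]].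
  exists X; split => //; apply: subset_trans s; exact: subsetUr.
exfalso.
have : Z = setT by apply/setP => w; rewrite inE; have := all w => /= /negbFE.
move=> eZ; move: hZ; rewrite eZ cardsT addnS.
by rewrite -addSn ltnNge leq_addr.
Qed.

Lemma extend (Z : {set A}) : (#|Z| < k)%N ->
  exists2 X, X \in dds_bases S k & Z \subset X.
Proof.
move=> hZ.
have hh : (#|Z| + (k - #|Z|) <= #|A|)%N by rewrite subnKC // ltnW.
have [X [sZX cX]] := grow hh.
rewrite subnKC in cX; last exact: ltnW.
case hl: [exists i, exists a, X \subset line i a]; last first.
  by exists X => //; rewrite inB cX eqxx hl.
move/existsP: hl => [i /existsP [a sXL]].
have [x xX xZ] : exists2 x, x \in X & x \notin Z.
  case: (pickP [pred x | (x \in X) && (x \notin Z)]) => [x /andP [] | none].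
    by exists x.
  exfalso.
  have : X \subset Z.
    by apply/subsetP => x xX; have := none x; rewrite /= xX /= => /negbFE.
  move/subset_leq_card; rewrite cX => /(leq_trans hZ); by rewrite ltnn.
have [z zL] := line_not_all i a.
have zX : z \notin X :\ x.
  by apply: contra zL; rewrite inE => /andP [_]; apply: (subsetP sXL).
have cXx : #|X :\ x| = k.-1 by move: cX; rewrite (cardsD1 x X) xX add1n => <-.
exists (z |: (X :\ x)).
  rewrite inB cardsU1 zX cXx add1n prednK ?(leq_trans _ Hk) // eqxx /=.
  apply/negP => /existsP [j /existsP [b sub]].
  have s1 : X :\ x \subset line j b by apply: subset_trans sub; apply: subsetUr.
  have s2 : X :\ x \subset line i a by apply: subset_trans sXL; apply: subsetDl.
  have c2 : (1 < #|X :\ x|)%N by rewrite cXx; case: k Hk => [|[|[|]]].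
  have [eij eab] := two_lines c2 s2 s1.
  have := (subsetP sub) z; rewrite setU11 -eij -eab => /(_ isT).
  by rewrite (negbTE zL).
apply/subsetP => w wZ; rewrite !inE (subsetP sZX) // andbT orbC.
by apply/orP; left; apply: contra xZ => /eqP <-.
Qed.

Lemma exchange B1 B2 x : B1 \in dds_bases S k -> B2 \in dds_bases S k ->
  x \in B1 :\: B2 -> exists2 y, y \in B2 :\: B1 & (B1 :\ x) :|: [set y] \in dds_bases S k.
Proof.
rewrite !inB => /andP [/eqP c1 n1] /andP [/eqP c2 n2].
rewrite inE => /andP [xB2 xB1].
set Y := B1 :\ x.
have cY : #|Y| = k.-1 by move: c1; rewrite (cardsD1 x B1) xB1 add1n => <-.
have c2Y : (1 < #|Y|)%N by rewrite cY; case: k Hk => [|[|[|]]].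
have [y yD good] : exists2 y, y \in B2 :\: B1 &
    forall j b, Y \subset line j b -> y \notin line j b.
  case hl: [exists i, exists a, Y \subset line i a].
    move/existsP: hl => [i /existsP [a sYL]].
    case: (pickP [pred y | (y \in B2 :\: B1) && (y \notin line i a)]) =>
      [y /andP [yD yL] | none].
      by exists y => // j b sYj; have [<- <-] := two_lines c2Y sYL sYj.
    exfalso; move/negP: n2; apply; apply/existsP; exists i; apply/existsP; exists a.
    apply/subsetP => w wB2; case wB1: (w \in B1).
      apply: (subsetP sYL); rewrite !inE wB1 andbT; apply/eqP => ew.
      by rewrite -ew wB2 in xB2.
    by have := none w; rewrite /= !inE wB1 wB2 /= => /negbFE.
  case: (pickP [pred y | y \in B2 :\: B1]) => [y yD|none].
    exists y => // j b sY; exfalso.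
    by move/negbT/existsPn: hl => /(_ j) /existsPn /(_ b); rewrite sY.
  exfalso.
  have sub : B2 \subset B1.
    by apply/subsetP => w wB2; have := none w; rewrite /= inE wB2 andbT => /negbFE.
  move/(subset_cardP (etrans c2 (esym c1))): sub => E.
  by rewrite E xB1 in xB2.
exists y => //.
have yY : y \notin Y.
  by move: yD; rewrite !inE => /andP [yB1 _]; rewrite (negbTE yB1) andbF.
rewrite inB setUC cardsU1 yY cY add1n prednK ?(leq_trans _ Hk) // eqxx /=.
apply/negP => /existsP [j /existsP [b sub]].
have sY : Y \subset line j b by apply: subset_trans sub; apply: subsetUr.
by have := good j b sY; rewrite (subsetP sub) // !inE eqxx.
Qed.

End Aux.

Theorem theorem3p26 (k : nat) (A : finZmodType) (l : nat) (S : 'I_l -> {set A}) :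
  3 <= k -> k <= #|A| -> distinct_difference_system S ->
  let B := dds_bases S k in
  [/\ matroid_bases B, matroid_rank_is B k, simple_matroid B
    & translation_invariant B].
Proof.
move=> Hk HkA HS B.
have H0 : (#|(set0 : {set A})| < k)%N by rewrite cards0 (leq_trans _ Hk).
split.
- split.
    apply/set0Pn; have [X XB _] := @extend A l S HS k Hk HkA set0 H0.
    by exists X.
  by move=> B1 B2 h1 h2 x hx; apply: (@exchange A l S HS k Hk B1 B2 x).
- by move=> X; rewrite inB => /andP [/eqP].
- move=> C [nind _]; rewrite leqNgt; apply/negP => hC; apply: nind.
  have [X XB sub] := @extend A l S HS k Hk HkA C (leq_trans hC Hk).
  by exists X.
- move=> X a; rewrite !inB => /andP [/eqP cX nl].
  have inj : injective (fun s : A => (s + a)%R).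
    by move=> u v /(congr1 (fun z => (z - a)%R)); rewrite !GRing.addrK.
  rewrite /translate (card_imset _ inj) cX eqxx /=.
  apply: contra nl => /existsP [j /existsP [b sub]].
  apply/existsP; exists j; apply/existsP; exists (b - a)%R.
  apply/subsetP => w wX.
  have := (subsetP sub) (w + a)%R (imset_f (fun s : A => (s + a)%R) wX); rewrite !mem_translate.
  by rewrite GRing.opprB GRing.addrA.
Qed.
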